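(* Let $\mathcal{B}$ be an AF $C^*$-algebra and $\mathcal{A}$ a canonical subalgebra of $\mathcal{B}$. If $\delta:\mathcal{A}\to\mathcal{B}$ is a bounded linear map with $(m+n+l)\delta(A^2)=m\delta(A)A+nA\delta(A)+lA\delta(I)A$ for all $A\in\mathcal{A}$, then $\delta(AB)=\delta(A)B=A\delta(B)$ for all $A,B\in\mathcal{A}$.
   Context: Fixed integers $m,n,l\ge 0$ satisfy $m+l\ge1$ and $n+l\ge1$. A unital $C^*$-algebra $\mathcal{B}$ is AF if it contains an increasing chain $\mathcal{B}_1\subseteq\mathcal{B}_2\subseteq\cdots$ of finite-dimensional $C^*$-subalgebras, each containing the unit $I$, whose union is norm dense. A canonical subalgebra $\mathcal{A}$ of $\mathcal{B}$ is a norm-closed subalgebra such that, for such a chain with compatible systems of matrix units (each $\mathcal{B}_k\cong M_{n_1}(\mathbb{C})\oplus\cdots\oplus M_{n_r}(\mathbb{C})$), each $\mathcal{A}_k=\mathcal{A}\cap\mathcal{B}_k$ is a CSL subalgebra of $\mathcal{B}_k$ (containing the diagonal matrix units and spanned by the matrix units it contains) and $\bigcup_k\mathcal{A}_k$ is norm dense in $\mathcal{A}$. *)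

(* Defs.v *)
From Stdlib Require Import Reals Arith.
Open Scope R_scope.

Record Cplx := mkC { re : R ; im : R }.
Definition C0 : Cplx := mkC 0 0.
Definition C1 : Cplx := mkC 1 0.
Definition Cadd (a b : Cplx) : Cplx := mkC (re a + re b) (im a + im b).
Definition Cmul (a b : Cplx) : Cplx :=
  mkC (re a * re b - im a * im b) (re a * im b + im a * re b).
Definition Cconj (a : Cplx) : Cplx := mkC (re a) (- im a).
Definition Cabs (a : Cplx) : R := sqrt (re a * re a + im a * im a).
Definition Cnat (k : nat) : Cplx := mkC (INR k) 0.

Record CstarAlgebra := {
  car :> Type;
  zero : car; one : car;
  add : car -> car -> car; opp : car -> car;
  mul : car -> car -> car;
  smul : Cplx -> car -> car;
  star : car -> car;
  norm : car -> R;
  add_assoc : forall x y z, add x (add y z) = add (add x y) z;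
  add_comm : forall x y, add x y = add y x;
  add_0 : forall x, add x zero = x;
  add_opp : forall x, add x (opp x) = zero;
  smul_1 : forall x, smul C1 x = x;
  smul_assoc : forall a b x, smul a (smul b x) = smul (Cmul a b) x;
  smul_addl : forall a b x, smul (Cadd a b) x = add (smul a x) (smul b x);
  smul_addr : forall a x y, smul a (add x y) = add (smul a x) (smul a y);
  mul_assoc : forall x y z, mul x (mul y z) = mul (mul x y) z;
  mul_1l : forall x, mul one x = x;
  mul_1r : forall x, mul x one = x;
  mul_addl : forall x y z, mul (add x y) z = add (mul x z) (mul y z);
  mul_addr : forall x y z, mul x (add y z) = add (mul x y) (mul x z);
  mul_smull : forall a x y, mul (smul a x) y = smul a (mul x y);
  mul_smulr : forall a x y, mul x (smul a y) = smul a (mul x y);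
  star_add : forall x y, star (add x y) = add (star x) (star y);
  star_smul : forall a x, star (smul a x) = smul (Cconj a) (star x);
  star_mul : forall x y, star (mul x y) = mul (star y) (star x);
  star_star : forall x, star (star x) = x;
  norm_eq0 : forall x, norm x = 0 <-> x = zero;
  norm_triangle : forall x y, norm (add x y) <= norm x + norm y;
  norm_smul : forall a x, norm (smul a x) = Cabs a * norm x;
  norm_submul : forall x y, norm (mul x y) <= norm x * norm y;
  norm_cstar : forall x, norm (mul (star x) x) = norm x * norm x;
  complete : forall u : nat -> car,
    (forall eps, eps > 0 -> exists N, forall p q, (N <= p)%nat -> (N <= q)%nat ->
        norm (add (u p) (opp (u q))) < eps) ->
    exists lim, forall eps, eps > 0 -> exists N, forall p, (N <= p)%nat ->
        norm (add (u p) (opp lim)) < eps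
}.

Arguments zero {_}. Arguments one {_}. Arguments add {_} _ _. Arguments opp {_} _.
Arguments mul {_} _ _. Arguments smul {_} _ _. Arguments star {_} _.
Arguments norm {_} _.

Definition sub {B : CstarAlgebra} (x y : B) : B := add x (opp y).

Fixpoint fsum {B : CstarAlgebra} (k : nat) (f : nat -> B) : B :=
  match k with O => zero | S k' => add (fsum k' f) (f k') end.

(* ---------- systems of matrix units ----------
   A system u with r blocks of sizes n_0,...,n_{r-1} and matrix units
   e s i j (s < r, i,j < n_s); its span is a finite-dimensional
   C*-subalgebra containing I isomorphic to M_{n_0} (+) ... (+) M_{n_{r-1}}. *)
Record MUsys (X : Type) := { mu_r : nat; mu_n : nat -> nat; mu_e : nat -> nat -> nat -> X }.
Arguments mu_r {_} _. Arguments mu_n {_} _ _. Arguments mu_e {_} _ _ _ _.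

Definition idx {X} (u : MUsys X) (s i j : nat) : Prop :=
  (s < mu_r u)%nat /\ (i < mu_n u s)%nat /\ (j < mu_n u s)%nat.

Definition is_mu_system {B : CstarAlgebra} (u : MUsys B) : Prop :=
  (forall s, (s < mu_r u)%nat -> (1 <= mu_n u s)%nat) /\
  (forall s i, (s < mu_r u)%nat -> (i < mu_n u s)%nat -> mu_e u s i i <> zero) /\
  (forall s i j t k l, idx u s i j -> idx u t k l ->
     mul (mu_e u s i j) (mu_e u t k l) =
       if (Nat.eqb s t && Nat.eqb j k)%bool then mu_e u s i l else zero) /\
  (forall s i j, idx u s i j -> star (mu_e u s i j) = mu_e u s j i) /\
  fsum (mu_r u) (fun s => fsum (mu_n u s) (fun i => mu_e u s i i)) = one.

Definition lin_comb {B : CstarAlgebra} (u : MUsys B) (c : nat -> nat -> nat -> Cplx) : B :=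
  fsum (mu_r u) (fun s => fsum (mu_n u s) (fun i => fsum (mu_n u s) (fun j =>
     smul (c s i j) (mu_e u s i j)))).

Definition in_span {B : CstarAlgebra} (u : MUsys B) (x : B) : Prop :=
  exists c, x = lin_comb u c.

Definition compatible {B : CstarAlgebra} (u v : MUsys B) : Prop :=
  forall s i j, idx u s i j ->
    exists c, (forall t a b, c t a b = C0 \/ c t a b = C1) /\
              mu_e u s i j = lin_comb v c.

(* an increasing chain of unital finite-dim C*-subalgebras, with compatible
   systems of matrix units, whose union is norm dense *)
Definition AF_chain (B : CstarAlgebra) (ch : nat -> MUsys B) : Prop :=
  (forall k, is_mu_system (ch k)) /\
  (forall k, compatible (ch k) (ch (S k))) /\
  (forall x : B, forall eps, eps > 0 ->
     exists k y, in_span (ch k) y /\ norm (sub x y) < eps).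

Definition is_AF (B : CstarAlgebra) : Prop := exists ch, AF_chain B ch.

Definition closed_subalgebra (B : CstarAlgebra) (A : B -> Prop) : Prop :=
  A zero /\
  (forall x y, A x -> A y -> A (add x y)) /\
  (forall a x, A x -> A (smul a x)) /\
  (forall x y, A x -> A y -> A (mul x y)) /\
  (forall (u : nat -> B) lim, (forall p, A (u p)) ->
     (forall eps, eps > 0 -> exists N, forall p, (N <= p)%nat -> norm (sub (u p) lim) < eps) ->
     A lim).

(* A ∩ B_k is a CSL subalgebra of B_k: contains the diagonal matrix units
   and is spanned by the matrix units it contains *)
Definition csl_part {B : CstarAlgebra} (A : B -> Prop) (u : MUsys B) : Prop :=
  (forall s i, (s < mu_r u)%nat -> (i < mu_n u s)%nat -> A (mu_e u s i i)) /\
  (forall x, (A x /\ in_span u x) <->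
     exists c, x = lin_comb u c /\
       (forall s i j, idx u s i j -> ~ A (mu_e u s i j) -> c s i j = C0)).

Definition canonical_subalgebra (B : CstarAlgebra) (A : B -> Prop) : Prop :=
  closed_subalgebra B A /\
  exists ch, AF_chain B ch /\
    (forall k, csl_part A (ch k)) /\
    (forall x, A x -> forall eps, eps > 0 ->
       exists k y, A y /\ in_span (ch k) y /\ norm (sub x y) < eps).

(* delta : A -> B, represented as a total function whose values off A are irrelevant *)
Definition linear_on (B : CstarAlgebra) (A : B -> Prop) (d : B -> B) : Prop :=
  (forall x y, A x -> A y -> d (add x y) = add (d x) (d y)) /\
  (forall a x, A x -> d (smul a x) = smul a (d x)).

Definition bounded_on (B : CstarAlgebra) (A : B -> Prop) (d : B -> B) : Prop :=
  exists M, forall x, A x -> norm (d x) <= M * norm x.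

(* Main.v *)
Require Import Defs.
From Stdlib Require Import Reals Arith ZArith Lia Lra Classical Ring.
Open Scope R_scope.

Arguments add_assoc {_}.
Arguments add_comm {_}.
Arguments add_0 {_}.
Arguments add_opp {_}.
Arguments smul_1 {_}.
Arguments smul_assoc {_}.
Arguments smul_addl {_}.
Arguments smul_addr {_}.
Arguments mul_assoc {_}.
Arguments mul_1l {_}.
Arguments mul_1r {_}.
Arguments mul_addl {_}.
Arguments mul_addr {_}.
Arguments mul_smull {_}.
Arguments mul_smulr {_}.
Arguments norm_eq0 {_}.
Arguments norm_triangle {_}.
Arguments norm_smul {_}.
Arguments norm_submul {_}.

Section Alg.
Variable B : CstarAlgebra.

Lemma add_0l (x : B) : add zero x = x.
Proof. rewrite add_comm; apply add_0. Qed.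

Lemma add_cancel_l (x y z : B) : add x y = add x z -> y = z.
Proof.
  intro H. apply (f_equal (add (opp x))) in H.
  rewrite !add_assoc, (add_comm (opp x) x), add_opp, !add_0l in H. exact H.
Qed.

Lemma add_swap (a b c d : B) : add (add a b) (add c d) = add (add a c) (add b d).
Proof.
  rewrite <- !add_assoc. f_equal. rewrite !add_assoc. f_equal. apply add_comm.
Qed.

Lemma smul_zero (a : Cplx) : smul a (@zero B) = zero.
Proof.
  apply (add_cancel_l (smul a zero)). rewrite <- smul_addr, !add_0. reflexivity.
Qed.

Lemma smul_C0 (x : B) : smul (mkC 0 0) x = zero.
Proof.
  apply norm_eq0. rewrite norm_smul. unfold Cabs; simpl.
  replace (0*0+0*0) with 0 by ring. rewrite sqrt_0. ring.
Qed.

Definition zs (z : Z) (x : B) : B := smul (mkC (IZR z) 0) x.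

Lemma zs_add a b x : zs (a + b)%Z x = add (zs a x) (zs b x).
Proof. unfold zs. rewrite <- smul_addl. f_equal. unfold Cadd; simpl.
  rewrite plus_IZR. f_equal; ring. Qed.

Lemma zs_mul a b x : zs a (zs b x) = zs (a * b)%Z x.
Proof. unfold zs. rewrite smul_assoc. f_equal. unfold Cmul; simpl.
  rewrite mult_IZR. f_equal; ring. Qed.

Lemma zs_1 x : zs 1%Z x = x.
Proof. unfold zs. apply smul_1. Qed.

Lemma zs_0 x : zs 0%Z x = zero.
Proof. unfold zs. apply smul_C0. Qed.

Lemma zs_zero a : zs a zero = zero.
Proof. apply smul_zero. Qed.

Lemma zs_addr a x y : zs a (add x y) = add (zs a x) (zs a y).
Proof. apply smul_addr. Qed.

Definition RT := (Z * B)%type.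
Definition radd (p q : RT) : RT := (Z.add (fst p) (fst q), add (snd p) (snd q)).
Definition rmul (p q : RT) : RT :=
  (Z.mul (fst p) (fst q), add (zs (fst p) (snd q)) (zs (fst q) (snd p))).
Definition ropp (p : RT) : RT := (Z.opp (fst p), opp (snd p)).
Definition rsub (p q : RT) : RT := radd p (ropp q).
Definition r0 : RT := (0%Z, zero).
Definition r1 : RT := (1%Z, zero).

Lemma RT_ring : ring_theory r0 r1 radd rmul rsub ropp (@eq RT).
Proof.
  constructor.
  - intros [a x]. unfold radd; simpl. rewrite add_0l. reflexivity.
  - intros [a x] [b y]. unfold radd; simpl. rewrite Z.add_comm, add_comm. reflexivity.
  - intros [a x] [b y] [c z]. unfold radd; simpl. rewrite Z.add_assoc, add_assoc. reflexivity.
  - intros [a x]. unfold rmul; simpl. rewrite zs_1, zs_zero, add_0. destruct a; reflexivity.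
  - intros [a x] [b y]. unfold rmul; simpl. rewrite Z.mul_comm, add_comm. reflexivity.
  - intros [a x] [b y] [c z]. unfold rmul; simpl.
    rewrite !zs_addr, !zs_mul, Z.mul_assoc, <- !add_assoc.
    rewrite (Z.mul_comm c a), (Z.mul_comm c b). reflexivity.
  - intros [a x] [b y] [c z]. unfold rmul, radd; simpl.
    rewrite zs_add, zs_addr, add_swap, Z.mul_add_distr_r. reflexivity.
  - reflexivity.
  - intros [a x]. unfold radd, ropp; simpl. rewrite Z.add_opp_diag_r, add_opp. reflexivity.
Qed.

Add Ring RTring : RT_ring.


Definition inj (x : B) : RT := (0%Z, x).
Definition cc (k : nat) : RT := (Z.of_nat k, zero).

Lemma inj_add x y : inj (add x y) = radd (inj x) (inj y).
Proof. reflexivity. Qed.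
Lemma inj_opp x : inj (opp x) = ropp (inj x).
Proof. reflexivity. Qed.
Lemma inj_ns k x : inj (smul (Cnat k) x) = rmul (cc k) (inj x).
Proof. unfold inj, cc, rmul; simpl. rewrite Z.mul_0_r, zs_zero, add_0.
  unfold zs, Cnat. rewrite INR_IZR_INZ. reflexivity. Qed.
Lemma cc_add a b : cc (a + b) = radd (cc a) (cc b).
Proof. unfold cc, radd; simpl. rewrite Nat2Z.inj_add, add_0. reflexivity. Qed.
Lemma inj_inj x y : inj x = inj y -> x = y.
Proof. intro H. apply (f_equal snd) in H. exact H. Qed.

Lemma lc4 (L R L1 R1 L2 R2 L3 R3 L4 R4 e1 e2 e3 e4 : RT) :
  L1 = R1 -> L2 = R2 -> L3 = R3 -> L4 = R4 ->
  rsub L R = radd (radd (rmul e1 (rsub L1 R1)) (rmul e2 (rsub L2 R2)))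
                  (radd (rmul e3 (rsub L3 R3)) (rmul e4 (rsub L4 R4))) ->
  L = R.
Proof.
  intros H1 H2 H3 H4 H.
  assert (Z1 : rsub L1 R1 = r0) by (rewrite H1; ring).
  assert (Z2 : rsub L2 R2 = r0) by (rewrite H2; ring).
  assert (Z3 : rsub L3 R3 = r0) by (rewrite H3; ring).
  assert (Z4 : rsub L4 R4 = r0) by (rewrite H4; ring).
  rewrite Z1, Z2, Z3, Z4 in H.
  replace L with (radd (rsub L R) R) by ring. rewrite H. ring.
Qed.

Lemma opp_unique (x y : B) : add x y = zero -> opp x = y.
Proof.
  intro H. rewrite <- (add_0 (opp x)), <- H, add_assoc, (add_comm (opp x) x), add_opp.
  apply add_0l.
Qed.

Lemma sub_zero (y z : B) : add y (opp z) = zero -> y = z.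
Proof.
  intro H. apply (f_equal (fun w => add w z)) in H.
  rewrite <- add_assoc, (add_comm (opp z) z), add_opp, add_0, add_0l in H. exact H.
Qed.

Lemma ns_cancel (k : nat) (w : B) : (1 <= k)%nat -> smul (Cnat k) w = zero -> w = zero.
Proof.
  intros Hk H. apply (f_equal (smul (mkC (/ INR k) 0))) in H.
  rewrite smul_assoc, smul_zero in H.
  assert (Hk' : INR k <> 0). { apply not_0_INR. lia. }
  assert (E : Cmul (mkC (/ INR k) 0) (Cnat k) = Defs.C1).
  { unfold Cmul, Cnat, Defs.C1; simpl. f_equal; field; auto. }
  rewrite E, smul_1 in H. exact H.
Qed.

Lemma cancel_gen (k : nat) (X : RT) : (1 <= k)%nat -> fst X = 0%Z -> rmul (cc k) X = r0 -> X = r0.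
Proof.
  destruct X as [a x]; simpl. intros Hk Ha H. subst a.
  unfold rmul, cc, r0 in *; simpl in H. apply (f_equal snd) in H; simpl in H.
  rewrite zs_0, add_0 in H. unfold zs in H. rewrite <- INR_IZR_INZ in H.
  apply ns_cancel in H; auto. subst; reflexivity.
Qed.

Lemma cancel2 (a b : nat) (x y : B) : (1 <= a)%nat -> (1 <= b)%nat ->
  rmul (cc a) (rmul (cc b) (rsub (inj x) (inj y))) = r0 -> x = y.
Proof.
  intros Ha Hb H.
  apply cancel_gen in H; auto.
  2:{ unfold rmul, rsub, radd, ropp, inj, cc; simpl. lia. }
  apply cancel_gen in H; auto.
  unfold rsub, radd, ropp, inj, r0 in H. simpl in H. apply (f_equal snd) in H. simpl in H.
  apply sub_zero; exact H.
Qed.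

Lemma cancel1 (a : nat) (x y : B) : (1 <= a)%nat ->
  rmul (cc a) (rsub (inj x) (inj y)) = r0 -> x = y.
Proof.
  intros Ha H. apply (cancel2 1 a); auto.
  replace (cc 1) with r1 by reflexivity. rewrite H. ring.
Qed.

Lemma mul_zero_r (x : B) : mul x zero = zero.
Proof. apply (add_cancel_l (mul x zero)). rewrite <- mul_addr, !add_0. reflexivity. Qed.
Lemma mul_zero_l (x : B) : mul zero x = zero.
Proof. apply (add_cancel_l (mul zero x)). rewrite <- mul_addl, !add_0. reflexivity. Qed.



Lemma opp_smul (x : B) : opp x = smul (mkC (-1) 0) x.
Proof.
  apply opp_unique. rewrite <- (smul_1 x) at 1. rewrite <- smul_addl.
  unfold Cadd, Defs.C1; simpl. replace (1 + -1) with 0 by ring. replace (0+0) with 0 by ring.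
  apply smul_C0.
Qed.

Lemma norm_opp (x : B) : norm (opp x) = norm x.
Proof.
  rewrite opp_smul, norm_smul. unfold Cabs; simpl.
  replace (-1 * -1 + 0 * 0) with 1 by ring. rewrite sqrt_1. ring.
Qed.

Lemma norm_nonneg (x : B) : 0 <= norm x.
Proof.
  pose proof (norm_triangle x (opp x)) as H. rewrite add_opp, norm_opp in H.
  assert (norm (@zero B) = 0) by (apply norm_eq0; reflexivity). lra.
Qed.

Lemma small_zero (x : B) : (forall eps, eps > 0 -> norm x <= eps) -> x = zero.
Proof.
  intro H. apply norm_eq0. pose proof (norm_nonneg x).
  destruct (Rle_lt_or_eq_dec 0 (norm x) H0) as [Hp|Hp]; auto.
  specialize (H (norm x / 2) ltac:(lra)). lra.
Qed.

Ltac push H := repeat (rewrite inj_add in H || rewrite inj_ns in H || rewrite cc_add in H || rewrite inj_opp in H).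
Ltac pushg := repeat (rewrite inj_add || rewrite inj_ns || rewrite cc_add || rewrite inj_opp).

Section Main.
Variables (m n l : nat) (A : B -> Prop) (delta : B -> B).
Hypothesis H0 : A zero.
Hypothesis Hadd : forall x y, A x -> A y -> A (add x y).
Hypothesis Hsm : forall a x, A x -> A (smul a x).
Hypothesis Hmulc : forall x y, A x -> A y -> A (mul x y).
Hypothesis Hone : A one.
Hypothesis Hdadd : forall x y, A x -> A y -> delta (add x y) = add (delta x) (delta y).
Hypothesis Hid : forall a, A a ->
     smul (Cnat (m + n + l)) (delta (mul a a)) =
     add (add (smul (Cnat m) (mul (delta a) a)) (smul (Cnat n) (mul a (delta a))))
         (smul (Cnat l) (mul (mul a (delta one)) a)).

Lemma lin1 a : A a ->
  smul (Cnat (m + n + l + l)) (delta a) =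
  add (smul (Cnat (m + l)) (mul (delta one) a)) (smul (Cnat (n + l)) (mul a (delta one))).
Proof.
  intro Ha.
  pose proof (Hid a Ha) as H1.
  pose proof (Hid (add a one) (Hadd _ _ Ha Hone)) as H2.
  repeat (rewrite mul_addl in H2 || rewrite mul_addr in H2).
  rewrite ?mul_1l, ?mul_1r in H2.
  rewrite (Hdadd (add (mul a a) a) (add a one)) in H2
    by (apply Hadd; auto).
  rewrite (Hdadd (mul a a) a) in H2 by auto.
  rewrite (Hdadd a one) in H2 by auto.
  repeat (rewrite mul_addl in H2 || rewrite mul_addr in H2).
  rewrite ?mul_1l, ?mul_1r, ?mul_assoc in H2.
  apply (f_equal inj) in H1. apply (f_equal inj) in H2.
  push H1. push H2.
  apply inj_inj. pushg.
  apply (lc4 _ _ _ _ _ _ _ _ _ _ (ropp r1) r1 r0 r0 H1 H2 (eq_refl r0) (eq_refl r0)).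
  ring.
Qed.


Hypothesis Hml : (1 <= m + l)%nat.
Hypothesis Hnl : (1 <= n + l)%nat.

Lemma idem_comm p : A p -> mul p p = p -> mul (delta one) p = mul p (delta one).
Proof.
  intros Hp Hpp. set (T := delta one).
  pose proof (lin1 p Hp) as E1. fold T in E1.
  pose proof (f_equal (fun x => mul x p) E1) as E2. simpl in E2.
  rewrite mul_smull, mul_addl, !mul_smull in E2.
  rewrite <- (mul_assoc T p p), Hpp in E2.
  pose proof (f_equal (mul p) E1) as E3. simpl in E3.
  rewrite mul_smulr, mul_addr, !mul_smulr in E3.
  rewrite !mul_assoc, Hpp in E3.
  pose proof (Hid p Hp) as H. fold T in H. rewrite Hpp in H.
  assert (K : rmul (cc (m + l)) (rmul (cc (n + l))
     (rsub (inj (add (mul T p) (mul p T))) (inj (add (mul (mul p T) p) (mul (mul p T) p))))) = r0).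
  { apply (f_equal inj) in E1. apply (f_equal inj) in E2. apply (f_equal inj) in E3.
    apply (f_equal inj) in H.
    push E1. push E2. push E3. push H. pushg.
    apply (lc4 _ _ _ _ _ _ _ _ _ _
      (radd (radd (radd (cc m) (cc n)) (cc l)) (cc l))
      (ropp (radd (radd (cc m) (cc n)) (cc l))) (cc m) (cc n) H E1 E2 E3).
    ring. }
  apply cancel2 in K; auto.
  pose proof (f_equal (mul p) K) as K1. pose proof (f_equal (fun x => mul x p) K) as K2.
  simpl in K1, K2.
  rewrite !mul_addr, !mul_assoc, Hpp in K1.
  apply add_cancel_l in K1.
  rewrite !mul_addl, <- !mul_assoc, Hpp in K2.
  rewrite (add_comm (mul T p)) in K2. apply add_cancel_l in K2.
  rewrite K2, K1, mul_assoc. reflexivity.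
Qed.


Definition comm (x : B) := mul (delta one) x = mul x (delta one).

Lemma comm_zero : comm zero.
Proof. unfold comm. rewrite mul_zero_r, mul_zero_l. reflexivity. Qed.
Lemma comm_add x y : comm x -> comm y -> comm (add x y).
Proof. unfold comm; intros. rewrite mul_addl, mul_addr. congruence. Qed.
Lemma comm_smul a x : comm x -> comm (smul a x).
Proof. unfold comm; intros. rewrite mul_smull, mul_smulr. congruence. Qed.
Lemma comm_fsum k f : (forall i, (i < k)%nat -> comm (f i)) -> comm (fsum k f).
Proof.
  induction k; intros H; simpl. apply comm_zero.
  apply comm_add; auto.
Qed.
Lemma A_fsum k f : (forall i, (i < k)%nat -> A (f i)) -> A (fsum k f).
Proof.
  induction k; intros H; simpl. apply H0.
  apply Hadd; auto.
Qed.

Lemma unit_comm (u : MUsys B) : is_mu_system u -> csl_part A u ->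
  forall s i j, idx u s i j -> A (mu_e u s i j) -> comm (mu_e u s i j).
Proof.
  intros [Hn [Hnz [Hmu [Hst Hsum]]]] [Hdiag Hspan] s i j Hidx HAe.
  destruct Hidx as [Hs [Hi Hj]].
  assert (Hii : idx u s i i) by (repeat split; auto).
  assert (HP : A (mu_e u s i i)) by auto.
  assert (PP : mul (mu_e u s i i) (mu_e u s i i) = mu_e u s i i).
  { rewrite (Hmu s i i s i i Hii Hii), !Nat.eqb_refl. reflexivity. }
  pose proof (idem_comm _ HP PP) as CP.
  destruct (Nat.eq_dec i j) as [<-|Hne]. exact CP.
  assert (Hij : idx u s i j) by (repeat split; auto).
  assert (PE : mul (mu_e u s i i) (mu_e u s i j) = mu_e u s i j).
  { rewrite (Hmu s i i s i j Hii Hij), !Nat.eqb_refl. reflexivity. }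
  assert (EP : mul (mu_e u s i j) (mu_e u s i i) = zero).
  { rewrite (Hmu s i j s i i Hij Hii), Nat.eqb_refl.
    replace (Nat.eqb j i) with false by (symmetry; apply Nat.eqb_neq; auto). reflexivity. }
  assert (EE : mul (mu_e u s i j) (mu_e u s i j) = zero).
  { rewrite (Hmu s i j s i j Hij Hij), Nat.eqb_refl.
    replace (Nat.eqb j i) with false by (symmetry; apply Nat.eqb_neq; auto). reflexivity. }
  assert (HQ : A (add (mu_e u s i i) (mu_e u s i j))) by auto.
  assert (QQ : mul (add (mu_e u s i i) (mu_e u s i j)) (add (mu_e u s i i) (mu_e u s i j))
               = add (mu_e u s i i) (mu_e u s i j)).
  { rewrite mul_addl, !mul_addr, PP, PE, EP, EE, !add_0. reflexivity. }
  pose proof (idem_comm _ HQ QQ) as CQ.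
  unfold comm in *. rewrite mul_addl, mul_addr, CP in CQ.
  apply add_cancel_l in CQ. exact CQ.
Qed.

Lemma span_comm (u : MUsys B) : is_mu_system u -> csl_part A u ->
  forall y, A y -> in_span u y -> comm y.
Proof.
  intros Hu Hc y Hy Hsp. pose proof Hc as [_ Hspan].
  destruct (proj1 (Hspan y) (conj Hy Hsp)) as [c [-> Hc0]].
  unfold lin_comb. apply comm_fsum; intros s Hs. apply comm_fsum; intros i Hi.
  apply comm_fsum; intros j Hj.
  assert (Hidx : idx u s i j) by (repeat split; auto).
  destruct (classic (A (mu_e u s i j))) as [HA|HN].
  - apply comm_smul. apply unit_comm; auto.
  - rewrite (Hc0 s i j Hidx HN). unfold C0. rewrite smul_C0. apply comm_zero.
Qed.

Lemma dense_comm a : (forall eps, eps > 0 -> exists y, comm y /\ norm (sub a y) < eps) -> comm a.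
Proof.
  intros H. unfold comm. set (T := delta one).
  apply sub_zero. apply small_zero. intros eps Heps.
  pose proof (norm_nonneg T) as HT.
  destruct (H (eps / (2 * norm T + 1))) as [y [Cy Hy]].
  { apply Rdiv_lt_0_compat; lra. }
  set (d := sub a y) in *.
  assert (Ea : a = add d y).
  { unfold d, sub. rewrite <- add_assoc, (add_comm (opp y) y), add_opp, add_0. reflexivity. }
  assert (Ew : add (mul T a) (opp (mul a T)) = add (mul T d) (opp (mul d T))).
  { apply inj_inj. rewrite Ea, mul_addl, mul_addr. unfold comm in Cy. fold T in Cy.
    pushg. rewrite Cy. ring. }
  rewrite Ew.
  pose proof (norm_triangle (mul T d) (opp (mul d T))) as N1.
  rewrite norm_opp in N1.
  pose proof (norm_submul T d) as N2. pose proof (norm_submul d T) as N3.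
  pose proof (norm_nonneg d) as Hd.
  assert (norm T * norm d <= norm T * (eps / (2 * norm T + 1))) by (apply Rmult_le_compat_l; lra).
  assert (norm T * (eps / (2 * norm T + 1)) * 2 <= eps).
  { unfold Rdiv. replace (norm T * (eps * / (2 * norm T + 1)) * 2) with
      (eps * (2 * norm T / (2 * norm T + 1))) by (field; lra).
    assert (2 * norm T / (2 * norm T + 1) <= 1).
    { apply Rmult_le_reg_r with (2 * norm T + 1). lra.
      unfold Rdiv. rewrite Rmult_assoc, Rinv_l by lra. lra. }
    nra. }
  lra.
Qed.

Lemma delta_T a : A a -> comm a -> delta a = mul (delta one) a.
Proof.
  intros Ha Ca. pose proof (lin1 a Ha) as E. unfold comm in Ca.
  rewrite <- Ca in E. apply (f_equal inj) in E. push E.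
  apply (cancel1 (m + l + (n + l))). lia.
  rewrite cc_add, cc_add, cc_add.
  apply (lc4 _ _ _ _ _ _ _ _ _ _ r1 r0 r0 r0 E (eq_refl r0) (eq_refl r0) (eq_refl r0)).
  ring.
Qed.

End Main.
End Alg.

Theorem theorem3p8 (m n l : nat) (Hml : (1 <= m + l)%nat) (Hnl : (1 <= n + l)%nat)
  (B : CstarAlgebra) (A : B -> Prop)
  (HAF : is_AF B) (HA : canonical_subalgebra B A)
  (delta : B -> B) (Hlin : linear_on B A delta) (Hbd : bounded_on B A delta)
  (Hid : forall a, A a ->
     smul (Cnat (m + n + l)) (delta (mul a a)) =
     add (add (smul (Cnat m) (mul (delta a) a)) (smul (Cnat n) (mul a (delta a))))
         (smul (Cnat l) (mul (mul a (delta one)) a))) :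
  forall a b, A a -> A b ->
    delta (mul a b) = mul (delta a) b /\ mul (delta a) b = mul a (delta b).
Proof.
  intros a b Ha Hb.
  destruct HA as [[H0 [Hadd [Hsm [Hmulc Hlim]]]] [ch [[Hsys [_ _]] [Hcsl Hdense]]]].
  destruct Hlin as [Hdadd Hdsm].
  assert (Hone : A one).
  { destruct (Hsys 0%nat) as [_ [_ [_ [_ Hsum]]]]. rewrite <- Hsum.
    destruct (Hcsl 0%nat) as [Hdiag _].
    apply (A_fsum B A H0 Hadd); intros s Hs.
    apply (A_fsum B A H0 Hadd); intros i Hi. auto. }
  assert (Hc : forall x, A x -> comm B delta x).
  { intros x Hx. apply dense_comm. intros eps Heps.
    destruct (Hdense x Hx eps Heps) as [k [y [Hy [Hsp Hn]]]].
    exists y. split; auto.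
    apply (span_comm B m n l A delta Hadd Hmulc Hone Hdadd Hid Hml Hnl (ch k)); auto. }
  assert (HT : forall x, A x -> delta x = mul (delta one) x).
  { intros x Hx. apply (delta_T B m n l A delta Hadd Hmulc Hone Hdadd Hid Hml Hnl); auto. }
  rewrite (HT (mul a b)) by auto. rewrite (HT a) by auto. rewrite (HT b) by auto.
  split. apply mul_assoc.
  rewrite !mul_assoc. f_equal. exact (Hc a Ha).
Qed.
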